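(* Let $B$ be a positive integer and let $\Psi=\forall X\in\mathbb R^n.\exists Y\in\mathbb R^m.\,(|X|>B\lor\Phi_0(X,Y))$ be a $\Pi_{2,<}$-sentence (so $\Phi_0$ is a $\mathrm{QFF}_<$-formula). Then $\Psi$ is true over $\mathbb R$ if and only if the sentence $\exists C\in\mathbb R.\forall X\in\mathbb R^n.\exists Y\in\mathbb R^m.\,(|X|>B\lor(|Y|\le C\land\Phi_0(X,Y)))$ is true over $\mathbb R$.
   Context: $\mathcal L$ is the first-order language over the signature $\langle \mathbb Z,+,\times,<,\le\rangle$ with connectives $\land,\lor$, interpreted over $\mathbb R$. A $\mathrm{QFF}_<$-formula is a quantifier-free $\mathcal L$-formula not containing $\le$. A $\Pi_{2,<}$-sentence has the form $\forall X.\exists Y.\,\chi(X,Y)$ with $\chi$ a $\mathrm{QFF}_<$-formula. For $X=(x_1,\dots,x_n)$ and a term $c$, $|X|\le c$ abbreviates $\bigwedge_j(-c\le x_j\le c)$ and $|X|>c$ abbreviates $\bigvee_j(x_j>c\lor x_j<-c)$. *)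

(* Defs.v *)
From Stdlib Require Import Reals ZArith.
Open Scope R_scope.

Definition fin (n : nat) : Type := {i : nat | (i < n)%nat}.

Inductive term (V : Type) : Type :=
| TVar : V -> term V
| TConst : Z -> term V
| TAdd : term V -> term V -> term V
| TMul : term V -> term V -> term V.
Arguments TVar {V} _.
Arguments TConst {V} _.
Arguments TAdd {V} _ _.
Arguments TMul {V} _ _.

Fixpoint teval {V : Type} (env : V -> R) (t : term V) : R :=
  match t with
  | TVar v => env v
  | TConst z => IZR z
  | TAdd a b => teval env a + teval env b
  | TMul a b => teval env a * teval env b
  end.

(* QFF_< formulas: quantifier-free, built from strict atoms t1 < t2
   with the connectives /\ and \/ only (no <=, no negation). *)
Inductive qff_lt (V : Type) : Type :=
| FLt : term V -> term V -> qff_lt V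
| FAnd : qff_lt V -> qff_lt V -> qff_lt V
| FOr : qff_lt V -> qff_lt V -> qff_lt V.
Arguments FLt {V} _ _.
Arguments FAnd {V} _ _.
Arguments FOr {V} _ _.

Fixpoint holds {V : Type} (env : V -> R) (f : qff_lt V) : Prop :=
  match f with
  | FLt a b => teval env a < teval env b
  | FAnd f g => holds env f /\ holds env g
  | FOr f g => holds env f \/ holds env g
  end.

Definition envXY {n m : nat} (X : fin n -> R) (Y : fin m -> R)
  (v : fin n + fin m) : R :=
  match v with inl i => X i | inr j => Y j end.

Definition norm_le {n : nat} (X : fin n -> R) (c : R) : Prop :=
  forall j : fin n, - c <= X j <= c.

Definition norm_gt {n : nat} (X : fin n -> R) (c : R) : Prop :=
  exists j : fin n, X j > c \/ X j < - c.

(* Main.v *)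
Require Import Defs.
From Stdlib Require Import Reals ZArith.
From Stdlib Require Import Lra Lia Psatz FunctionalExtensionality Arith.
Open Scope R_scope.

Lemma mul_cont (a b eps : R) : eps > 0 -> exists e, e > 0 /\
  forall a' b', Rabs (a' - a) < e -> Rabs (b' - b) < e -> Rabs (a' * b' - a * b) < eps.
Proof.
  intros He.
  assert (Hp : 0 < Rabs a + Rabs b + 1) by (pose proof (Rabs_pos a); pose proof (Rabs_pos b); lra).
  exists (Rmin 1 (eps / (Rabs a + Rabs b + 1))).
  assert (Hq : 0 < eps / (Rabs a + Rabs b + 1)) by (apply Rdiv_lt_0_compat; lra).
  split. { apply Rmin_glb_lt; lra. }
  intros a' b' Ha Hb.
  set (e := Rmin 1 (eps / (Rabs a + Rabs b + 1))) in *.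
  assert (He1 : e <= 1) by apply Rmin_l.
  assert (He2 : e <= eps / (Rabs a + Rabs b + 1)) by apply Rmin_r.
  assert (He3 : e * (Rabs a + Rabs b + 1) <= eps).
  { apply (Rmult_le_compat_r (Rabs a + Rabs b + 1)) in He2; [|lra].
    unfold Rdiv in He2. rewrite Rmult_assoc, Rinv_l in He2; lra. }
  replace (a' * b' - a * b) with ((a'-a)*(b'-b) + a*(b'-b) + (a'-a)*b) by ring.
  set (x := a' - a) in *. set (y := b' - b) in *.
  pose proof (Rabs_triang ((x*y) + a*y) (x*b)).
  pose proof (Rabs_triang (x*y) (a*y)).
  rewrite !Rabs_mult in *.
  pose proof (Rabs_pos a); pose proof (Rabs_pos b); pose proof (Rabs_pos x); pose proof (Rabs_pos y).
  assert (Rabs x * Rabs y <= Rabs x) by nra.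
  assert (Rabs a * Rabs y <= Rabs a * e) by nra.
  assert (Rabs x * Rabs b <= e * Rabs b) by nra.
  nra.
Qed.

Lemma teval_cont {V : Type} (t : term V) (env : V -> R) : forall eps, eps > 0 ->
  exists d, d > 0 /\ forall env', (forall v, Rabs (env' v - env v) < d) ->
  Rabs (teval env' t - teval env t) < eps.
Proof.
  induction t as [v|z|a IHa b IHb|a IHa b IHb]; intros eps He; simpl.
  - exists eps; split; auto.
  - exists 1; split; [lra|]. intros. unfold Rminus; rewrite Rplus_opp_r, Rabs_R0; lra.
  - destruct (IHa (eps/2)) as [d1 [Hd1 H1]]; [lra|].
    destruct (IHb (eps/2)) as [d2 [Hd2 H2]]; [lra|].
    exists (Rmin d1 d2); split; [apply Rmin_glb_lt; lra|].
    intros env' Hv.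
    assert (A := H1 env' (fun v => Rlt_le_trans _ _ _ (Hv v) (Rmin_l _ _))).
    assert (Bb := H2 env' (fun v => Rlt_le_trans _ _ _ (Hv v) (Rmin_r _ _))).
    replace (teval env' a + teval env' b - (teval env a + teval env b)) with
      ((teval env' a - teval env a) + (teval env' b - teval env b)) by ring.
    pose proof (Rabs_triang (teval env' a - teval env a) (teval env' b - teval env b)). lra.
  - destruct (mul_cont (teval env a) (teval env b) eps He) as [e [He' Hm]].
    destruct (IHa e He') as [d1 [Hd1 H1]].
    destruct (IHb e He') as [d2 [Hd2 H2]].
    exists (Rmin d1 d2); split; [apply Rmin_glb_lt; lra|].
    intros env' Hv. apply Hm.
    + apply H1. intro v. exact (Rlt_le_trans _ _ _ (Hv v) (Rmin_l _ _)).
    + apply H2. intro v. exact (Rlt_le_trans _ _ _ (Hv v) (Rmin_r _ _)).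
Qed.

Lemma holds_open {V : Type} (f : qff_lt V) (env : V -> R) : holds env f ->
  exists d, d > 0 /\ forall env', (forall v, Rabs (env' v - env v) < d) -> holds env' f.
Proof.
  induction f as [a b|f IHf g IHg|f IHf g IHg]; simpl; intros H.
  - set (eps := (teval env b - teval env a) / 2).
    destruct (teval_cont a env eps) as [d1 [Hd1 H1]]; [unfold eps; lra|].
    destruct (teval_cont b env eps) as [d2 [Hd2 H2]]; [unfold eps; lra|].
    exists (Rmin d1 d2); split; [apply Rmin_glb_lt; lra|].
    intros env' Hv.
    assert (A := H1 env' (fun v => Rlt_le_trans _ _ _ (Hv v) (Rmin_l _ _))).
    assert (Bb := H2 env' (fun v => Rlt_le_trans _ _ _ (Hv v) (Rmin_r _ _))).
    apply Rabs_def2 in A. apply Rabs_def2 in Bb. unfold eps in *. lra.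
  - destruct H as [Hf Hg].
    destruct (IHf Hf) as [d1 [Hd1 H1]]. destruct (IHg Hg) as [d2 [Hd2 H2]].
    exists (Rmin d1 d2); split; [apply Rmin_glb_lt; lra|].
    intros env' Hv. split.
    + apply H1. intro v. exact (Rlt_le_trans _ _ _ (Hv v) (Rmin_l _ _)).
    + apply H2. intro v. exact (Rlt_le_trans _ _ _ (Hv v) (Rmin_r _ _)).
  - destruct H as [Hf|Hg].
    + destruct (IHf Hf) as [d [Hd H1]]. exists d; split; auto.
    + destruct (IHg Hg) as [d [Hd H1]]. exists d; split; auto.
Qed.

Lemma holds_ext {V : Type} (f : qff_lt V) (e1 e2 : V -> R) :
  (forall v, e1 v = e2 v) -> holds e1 f -> holds e2 f.
Proof.
  intros He.
  assert (Ht : forall t, teval e1 t = teval e2 t).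
  { induction t; simpl; congruence. }
  induction f; simpl; rewrite ?Ht; tauto.
Qed.

Lemma bound_fin (m : nat) (Y : fin m -> R) : exists C, norm_le Y C.
Proof.
  assert (H : forall k, exists C, forall j : fin m, (proj1_sig j < k)%nat -> - C <= Y j <= C).
  { induction k as [|k [C IH]].
    - exists 0. intros j Hj; lia.
    - destruct (lt_dec k m) as [Hk|Hk].
      + exists (Rmax C (Rabs (Y (exist _ k Hk)))). intros [j Hj] Hjk. simpl in Hjk.
        destruct (Nat.eq_dec j k) as [->|Hne].
        * assert (Hj = Hk) by apply le_unique. subst.
          pose proof (Rmax_r C (Rabs (Y (exist _ k Hk)))).
          split; [ | pose proof (RRle_abs (Y (exist _ k Hk))); lra].
          pose proof (Rabs_Ropp (Y (exist _ k Hk))).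
          pose proof (RRle_abs (- Y (exist _ k Hk))). lra.
        * specialize (IH (exist _ j Hj)). simpl in IH. pose proof (Rmax_l C (Rabs (Y (exist _ k Hk)))).
          destruct IH as [I1 I2]; [lia|]. split; lra.
      + exists C. intros [j Hj] Hjk. apply IH. simpl. lia. }
  destruct (H m) as [C HC]. exists C. intros j. apply HC. destruct j; simpl; auto.
Qed.

Lemma uniform1 (a b : R) (Q : R -> R -> Prop) : a <= b ->
  (forall t C C', C <= C' -> Q t C -> Q t C') ->
  (forall t, a <= t <= b -> exists C d, d > 0 /\ forall t', Rabs (t' - t) < d -> Q t' C) ->
  exists C, forall t, a <= t <= b -> Q t C.
Proof.
  intros Hab Hmon Hloc.
  set (E := fun s => a <= s <= b /\ exists C, forall t, a <= t <= s -> Q t C).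
  assert (Ea : E a).
  { split; [lra|]. destruct (Hloc a) as [C [d [Hd H]]]; [lra|]. exists C.
    intros t Ht. apply H. replace (t - a) with 0 by lra. rewrite Rabs_R0; lra. }
  assert (Hbd : bound E) by (exists b; intros s [Hs _]; lra).
  destruct (completeness E Hbd (ex_intro _ a Ea)) as [s [Hub Hlub]].
  assert (Has : a <= s) by (apply Hub; auto).
  assert (Hsb : s <= b) by (apply Hlub; intros x [Hx _]; lra).
  destruct (Hloc s) as [C0 [d [Hd H0]]]; [lra|].
  assert (Hex : exists s1, E s1 /\ s - d < s1).
  { apply Classical_Prop.NNPP. intro Hn.
    assert (Hu : is_upper_bound E (s - d)).
    { intros x Ex. apply Rnot_lt_le. intro Hx. apply Hn. exists x; auto. }
    specialize (Hlub _ Hu). lra. }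
  destruct Hex as [s1 [[Hs1 [C1 HC1]] Hlt]].
  assert (Hs2 : E (Rmin b (s + d/2))).
  { split. { split; [apply Rmin_glb; lra | apply Rmin_l]. }
    exists (Rmax C0 C1). intros t [Ht1 Ht2].
    pose proof (Rmin_r b (s + d/2)).
    destruct (Rle_dec t s1) as [Hts|Hts].
    - apply (Hmon _ C1); [apply Rmax_r|]. apply HC1; lra.
    - apply (Hmon _ C0); [apply Rmax_l|]. apply H0. apply Rabs_def1; lra. }
  assert (Hs2' := Hub _ Hs2).
  destruct (Rle_dec b (s + d/2)) as [Hb|Hb].
  - rewrite Rmin_left in Hs2 by lra. destruct Hs2 as [_ [C HC]].
    exists C. intros t Ht; apply HC; lra.
  - rewrite Rmin_right in Hs2' by lra. lra.
Qed.

Definition boxn (n : nat) (B : R) (X : nat -> R) : Prop :=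
  forall i, (i < n)%nat -> - B <= X i <= B.
Definition closen (n : nat) (d : R) (X X' : nat -> R) : Prop :=
  forall i, (i < n)%nat -> Rabs (X' i - X i) < d.
Definition extn (n : nat) (Z : nat -> R) (t : R) : nat -> R :=
  fun i => if Nat.eqb i n then t else Z i.

Lemma uniformn (B : R) (HB : 0 <= B) (n : nat) : forall Q : (nat -> R) -> R -> Prop,
  (forall X C C', C <= C' -> Q X C -> Q X C') ->
  (forall X, boxn n B X -> exists C d, d > 0 /\ forall X', closen n d X X' -> Q X' C) ->
  exists C, forall X, boxn n B X -> Q X C.
Proof.
  induction n as [|n IH]; intros Q Hmon Hloc.
  - destruct (Hloc (fun _ => 0)) as [C [d [Hd H]]]. { intros i Hi; lia. }
    exists C. intros X _. apply H. intros i Hi; lia.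
  - set (Q' := fun t C => forall Z, boxn n B Z -> Q (extn n Z t) C).
    assert (Hz : boxn n B (fun _ => 0)) by (intros i Hi; lra).
    destruct (uniform1 (-B) B Q') as [C HC].
    + lra.
    + intros t C C' HCC H Z HZ. eapply Hmon; eauto.
    + intros t0 Ht0.
      set (Q'' := fun Z C => 1 <= C /\ forall X', closen n (/C) Z X' ->
                    Rabs (X' n - t0) < /C -> Q X' C).
      destruct (IH Q'') as [C1 HC1].
      * intros Z C C' HCC [H1 H2]. split; [lra|]. intros X' Hc Ht.
        assert (Hi : / C' <= / C) by (apply Rinv_le_contravar; lra).
        apply (Hmon _ C); auto. apply H2; [|lra].
        intros i Hi'. specialize (Hc i Hi'). lra.
      * intros Z HZ.
        destruct (Hloc (extn n Z t0)) as [C0 [d0 [Hd0 H0]]].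
        { intros i Hi. unfold extn. destruct (Nat.eqb_spec i n); [lra|]. apply HZ; lia. }
        set (C := Rmax 1 (Rmax C0 (2 / d0))).
        exists C, (d0 / 2). split; [lra|].
        intros Z' HZZ'.
        assert (HC1 : 1 <= C) by apply Rmax_l.
        assert (HC2 : C0 <= C) by (eapply Rle_trans; [apply Rmax_l|apply Rmax_r]).
        assert (HC3 : 2 / d0 <= C) by (eapply Rle_trans; [apply Rmax_r|apply Rmax_r]).
        assert (HiC : / C <= d0 / 2).
        { replace (d0 / 2) with (/ (2 / d0)) by (field; lra).
          apply Rinv_le_contravar; auto. apply Rdiv_lt_0_compat; lra. }
        split; auto. intros X' Hc Ht.
        apply (Hmon _ C0); auto. apply H0.
        intros i Hi. unfold extn. destruct (Nat.eqb_spec i n) as [->|Hne]; [lra|].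
        assert (Hin : (i < n)%nat) by lia.
        specialize (Hc i Hin). specialize (HZZ' i Hin).
        replace (X' i - Z i) with ((X' i - Z' i) + (Z' i - Z i)) by ring.
        pose proof (Rabs_triang (X' i - Z' i) (Z' i - Z i)). lra.
      * assert (H1 : 1 <= C1) by (apply (HC1 _ Hz)).
        exists C1, (/ C1). split; [apply Rinv_0_lt_compat; lra|].
        intros t Ht Z HZ. apply (HC1 Z HZ).
        -- intros i Hi. unfold extn. destruct (Nat.eqb_spec i n); [lia|].
           unfold Rminus; rewrite Rplus_opp_r, Rabs_R0. apply Rinv_0_lt_compat; lra.
        -- unfold extn. rewrite Nat.eqb_refl. auto.
    + exists C. intros X HX.
      assert (HXe : X = extn n X (X n)).
      { apply functional_extensionality. intro i. unfold extn.
        destruct (Nat.eqb_spec i n); subst; auto. }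
      rewrite HXe. apply HC.
      * apply HX. lia.
      * intros i Hi. apply HX. lia.
Qed.

Definition tofin (n : nat) (Xn : nat -> R) : fin n -> R := fun i => Xn (proj1_sig i).
Definition fromfin (n : nat) (X : fin n -> R) : nat -> R :=
  fun i => match lt_dec i n with left h => X (exist _ i h) | right _ => 0 end.

Lemma tofin_fromfin n X (j : fin n) : tofin n (fromfin n X) j = X j.
Proof.
  destruct j as [i h]. unfold tofin, fromfin; simpl.
  destruct (lt_dec i n) as [h'|h']; [|lia].
  f_equal. f_equal. apply le_unique.
Qed.

Theorem mainTheorem6 (B : nat) (HB : (0 < B)%nat) (n m : nat)
  (Phi0 : qff_lt (fin n + fin m)) :
  (forall X : fin n -> R, exists Y : fin m -> R,
      norm_gt X (INR B) \/ holds (envXY X Y) Phi0)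
  <->
  (exists C : R, forall X : fin n -> R, exists Y : fin m -> R,
      norm_gt X (INR B) \/ (norm_le Y C /\ holds (envXY X Y) Phi0)).
Proof.
  split.
  - intros H.
    set (Q := fun Xn C => exists Y : fin m -> R, norm_le Y C /\
                 holds (envXY (tofin n Xn) Y) Phi0).
    assert (HB0 : 0 <= INR B) by apply pos_INR.
    destruct (uniformn (INR B) HB0 n Q) as [C HC].
    + intros X C C' HCC [Y [HY Hh]]. exists Y; split; auto.
      intro j. specialize (HY j). lra.
    + intros Xn Hbox.
      destruct (H (tofin n Xn)) as [Y [Hg|Hh]].
      { exfalso. destruct Hg as [[i hi] Hj]. specialize (Hbox i hi).
        unfold tofin in Hj; simpl in Hj. lra. }
      destruct (holds_open Phi0 _ Hh) as [d [Hd Hop]].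
      destruct (bound_fin m Y) as [C HCb].
      exists C, d. split; auto. intros X' Hc. exists Y. split; auto.
      apply Hop. intros [[i hi]|j]; simpl.
      * unfold tofin; simpl. apply Hc; auto.
      * unfold Rminus; rewrite Rplus_opp_r, Rabs_R0; lra.
    + exists C. intros X.
      destruct (Classical_Prop.classic (norm_gt X (INR B))) as [Hg|Hg].
      { exists (fun _ => 0). left; auto. }
      destruct (HC (fromfin n X)) as [Y [HY Hh]].
      { intros i Hi. unfold fromfin. destruct (lt_dec i n) as [h|h]; [|lia].
        split; apply Rnot_lt_le; intro Hl; apply Hg; exists (exist _ i h); lra. }
      exists Y. right. split; auto.
      eapply holds_ext; [|exact Hh].
      intros [j|j]; simpl; auto. apply tofin_fromfin.
  - intros [C H] X. destruct (H X) as [Y [Hg|[_ Hh]]]; exists Y; auto.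
Qed.
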